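(* Let $\boldsymbol p=(p,0,r)\in\mathbb{Z}^3$ with $1\le p\le r$. Then $$A(\boldsymbol a;\boldsymbol p)=\frac{1}{(\gamma-\alpha)_{r-p}(\gamma-\beta)_r}\begin{pmatrix}\dfrac{(\gamma)_r\,\phi_{11}^{(r-1)}}{(\alpha+1)_{p-1}} & \dfrac{(\gamma+1)_{r-1}\,\phi_{12}^{(r-1)}}{(\alpha+1)_{p-1}}\\[3mm] \dfrac{(\gamma)_{r+1}\,\phi_{21}^{(r-1)}}{(\alpha+1)_p} & \dfrac{(\gamma+1)_r\,\phi_{22}^{(r)}}{(\alpha+1)_p}\end{pmatrix},$$ where each $\phi_{ij}^{(k)}=\phi_{ij}^{(k)}(\boldsymbol a;\boldsymbol p)$ is a polynomial in $\alpha,\beta,\gamma$ (with coefficients rational in $z$) of degree at most $k$ in the variables $(\alpha,\gamma)$. Moreover $$\det A(\boldsymbol a;\boldsymbol p)=\frac{z^{-r}(z-1)^{r-p}(\gamma)_r(\gamma+1)_r}{(\alpha+1)_p(\gamma-\alpha)_{r-p}(\gamma-\beta)_r}.$$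
   Context: Write $\boldsymbol a=(\alpha,\beta,\gamma)$, ${}_2F_1(\boldsymbol a;z)={}_2F_1(\alpha,\beta;\gamma;z)$, $\boldsymbol 1=(1,1,1)$. For $\boldsymbol p\in\mathbb{Z}^3$ let $r(\boldsymbol a;\boldsymbol p;z)$, $q(\boldsymbol a;\boldsymbol p;z)$ be the unique rational functions of $(\alpha,\beta,\gamma,z)$ with ${}_2F_1(\boldsymbol a+\boldsymbol p;z)=r(\boldsymbol a;\boldsymbol p;z)\,{}_2F_1(\boldsymbol a;z)+q(\boldsymbol a;\boldsymbol p;z)\,{}_2F_1(\boldsymbol a+\boldsymbol 1;z)$ (obtained from Gauss's contiguous relations). Set $A(\boldsymbol a;\boldsymbol p):=\begin{pmatrix}r(\boldsymbol a;\boldsymbol p;z)&q(\boldsymbol a;\boldsymbol p;z)\\ r(\boldsymbol a;\boldsymbol p+\boldsymbol 1;z)&q(\boldsymbol a;\boldsymbol p+\boldsymbol 1;z)\end{pmatrix}$, so that $(F(\boldsymbol a+\boldsymbol p),F(\boldsymbol a+\boldsymbol p+\boldsymbol 1))^t=A(\boldsymbol a;\boldsymbol p)(F(\boldsymbol a),F(\boldsymbol a+\boldsymbol 1))^t$ with $F={}_2F_1(\cdot;z)$. $(\alpha)_k$ is the Pochhammer symbol. *)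

(* Defs.v *)
From HB Require Import structures.
From mathcomp Require Import all_boot all_order all_algebra.
From mathcomp Require Import fraction mpoly.
Set Implicit Arguments. Unset Strict Implicit. Unset Printing Implicit Defensive.
Import Order.TTheory GRing.Theory Num.Theory.
Local Open Scope ring_scope.

(* The field of rational functions Q(z)(gamma)(beta)(alpha), built as
   iterated fraction fields of univariate polynomial rings. *)
Definition Kz : fieldType := {fraction {poly rat}}.
Definition Kg : fieldType := {fraction {poly Kz}}.
Definition Kb : fieldType := {fraction {poly Kg}}.
Definition K  : fieldType := {fraction {poly Kb}}.

Definition embz (x : Kz) : Kg := FracField.tofrac (x%:P).
Definition embg (x : Kg) : Kb := FracField.tofrac (x%:P).
Definition embb (x : Kb) : K := FracField.tofrac (x%:P).
Definition embK (x : Kz) : K := embb (embg (embz x)).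

Definition zz : Kz := FracField.tofrac ('X : {poly rat}).
Definition zK : K := embK zz.
Definition gK : K := embb (embg (FracField.tofrac ('X : {poly Kz}))).
Definition bK : K := embb (FracField.tofrac ('X : {poly Kg})).
Definition aK : K := FracField.tofrac ('X : {poly Kb}).

Definition poch (x : K) (n : nat) : K := \prod_(i < n) (x + i%:R).

Definition mx2 (x11 x12 x21 x22 : K) : 'M[K]_2 :=
  \matrix_(i < 2, j < 2)
    if (i == 0 :> nat) then (if (j == 0 :> nat) then x11 else x12)
    else (if (j == 0 :> nat) then x21 else x22).

(* One-step contiguity matrices (from Gauss's contiguous relations) with
   F = 2F1(.;z), b = (a, b, c):
   (F(b+e1), F(b+e1+1))^t = S_alpha b (F(b), F(b+1))^t,
   (F(b+e3), F(b+e3+1))^t = S_gamma b (F(b), F(b+1))^t. *)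
Definition S_alpha (a b c : K) : 'M[K]_2 :=
  mx2 1 (zK * b / c)
      (c / ((a + 1) * (1 - zK))) ((a + 1 - c + b * zK) / ((a + 1) * (1 - zK))).

Definition S_gamma (a b c : K) : 'M[K]_2 :=
  let d := (c - a) * (c - b) in
  mx2 (c * (c - a - b) / d) ((1 - zK) * a * b / d)
      (c * (c + 1) / (zK * d)) (- (c * (c + 1) * (1 - zK)) / (zK * d)).

Fixpoint A_gamma (a b c : K) (r : nat) : 'M[K]_2 :=
  match r with
  | 0 => 1%:M
  | r'.+1 => S_gamma a b (c + r'%:R) *m A_gamma a b c r'
  end.

(* A((a,b,c); (p,0,r)): the connection matrix with
   (F(a+p), F(a+p+1))^t = A (F(a), F(a+1))^t, p = (p,0,r). *)
Fixpoint A_p0r (a b c : K) (p r : nat) : 'M[K]_2 :=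
  match p with
  | 0 => A_gamma a b c r
  | p'.+1 => S_alpha (a + p'%:R) b (c + r%:R) *m A_p0r a b c p' r
  end.

Definition Amat (p r : nat) : 'M[K]_2 := A_p0r aK bK gK p r.

(* evaluation of a polynomial in (alpha, beta, gamma) with coefficients
   in Q(z) at the generic point; variable 0 = alpha, 1 = beta, 2 = gamma *)
Definition abg (i : 'I_3) : K :=
  if (i == 0 :> nat) then aK else if (i == 1 :> nat) then bK else gK.
Definition evalABG (phi : {mpoly Kz[3]}) : K := (map_mpoly embK phi).@[abg].

Definition deg_ag_le (phi : {mpoly Kz[3]}) (k : nat) : Prop :=
  forall m, m \in msupp phi ->
    (m ord0 + m (@Ordinal 3 2 isT) <= k)%N.

(* Main.v *)
Require Import Defs.
From HB Require Import structures.
From mathcomp Require Import all_boot all_order all_algebra.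
From mathcomp Require Import fraction mpoly.
From mathcomp Require Import ring zify.
Import Order.TTheory GRing.Theory Num.Theory.
Local Open Scope ring_scope.

HB.instance Definition _ := GRing.RMorphism.copy embz (@FracField.tofrac _ \o polyC).
HB.instance Definition _ := GRing.RMorphism.copy embg (@FracField.tofrac _ \o polyC).
HB.instance Definition _ := GRing.RMorphism.copy embb (@FracField.tofrac _ \o polyC).
HB.instance Definition _ := GRing.RMorphism.copy embK (embb \o embg \o embz).

Lemma frac_lin_neq0 (F : fieldType) (c : F) :
  (FracField.tofrac (c%:P) - FracField.tofrac ('X : {poly F}) : {fraction {poly F}}) != 0.
Proof.
rewrite -tofracB tofrac_eq0 subr_eq0; apply/eqP => h.
have := congr1 (fun q : {poly F} => size q) h; rewrite /= size_polyX size_polyC; by case: (c == 0).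
Qed.

Lemma nzGA (y : Kb) : embb y - aK != 0.
Proof. exact: frac_lin_neq0. Qed.
Lemma nzA (y : Kb) : aK + embb y != 0.
Proof.
have -> : aK + embb y = - (embb (- y) - aK) by rewrite rmorphN; ring.
by rewrite oppr_eq0 nzGA.
Qed.
Lemma nzGB (y : Kg) : embb (embg y - FracField.tofrac 'X) != 0.
Proof. by rewrite fmorph_eq0 frac_lin_neq0. Qed.
Lemma nzG (y : Kz) : embb (embg (FracField.tofrac 'X + embz y)) != 0.
Proof.
rewrite !fmorph_eq0.
have -> : (FracField.tofrac 'X + embz y : Kg) = - (embz (- y) - FracField.tofrac 'X)
  by rewrite rmorphN; ring.
by rewrite oppr_eq0 frac_lin_neq0.
Qed.
Lemma nzZ : zK != 0.
Proof. by rewrite fmorph_eq0 tofrac_eq0 polyX_eq0. Qed.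
Lemma nz1Z : 1 - zK != 0.
Proof.
have -> : 1 - zK = embK (1 - zz) by rewrite rmorphB rmorph1.
by rewrite fmorph_eq0 frac_lin_neq0.
Qed.

Set Implicit Arguments. Unset Strict Implicit. Unset Printing Implicit Defensive.

Section Gen.
Variables (F : fieldType) (z : F).

Definition M2 (x11 x12 x21 x22 : F) : 'M[F]_2 :=
  \matrix_(i < 2, j < 2)
    if (i == 0 :> nat) then (if (j == 0 :> nat) then x11 else x12)
    else (if (j == 0 :> nat) then x21 else x22).

Definition SA (a b c : F) : 'M[F]_2 :=
  M2 1 (z * b / c)
      (c / ((a + 1) * (1 - z))) ((a + 1 - c + b * z) / ((a + 1) * (1 - z))).

Definition SG (a b c : F) : 'M[F]_2 :=
  let d := (c - a) * (c - b) in
  M2 (c * (c - a - b) / d) ((1 - z) * a * b / d)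
      (c * (c + 1) / (z * d)) (- (c * (c + 1) * (1 - z)) / (z * d)).

Fixpoint AG (a b c : F) (r : nat) : 'M[F]_2 :=
  match r with
  | 0 => 1%:M
  | r'.+1 => SG a b (c + r'%:R) *m AG a b c r'
  end.

Fixpoint AP (a b c : F) (p r : nat) : 'M[F]_2 :=
  match p with
  | 0 => AG a b c r
  | p'.+1 => SA (a + p'%:R) b (c + r%:R) *m AP a b c p' r
  end.

Definition pc (x : F) (n : nat) : F := \prod_(i < n) (x + i%:R).

Definition Eh (b c : F) := M2 1 (-(1-z)*b) (-z^-1) ((c - b*z)/z).
Fixpoint Qm (a b C : F) (j : nat) : 'M[F]_2 :=
  match j with
  | 0 => Eh b C
  | j'.+1 => Eh b (C + j'.+1%:R) *m M2 (a + j'.+1%:R) 0 0 1 *m Qm a b C j'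
  end.
Definition Nmat (a b c : F) := M2 (c - a - b) ((1-z)*a*b) z^-1 (-(1-z)*c/z).
Fixpoint Nm (a b g : F) (s : nat) : 'M[F]_2 :=
  match s with
  | 0 => 1%:M
  | s'.+1 => Nmat a b (g + s'%:R) *m Nm a b g s'
  end.
Fixpoint Al (a b c : F) (p : nat) : 'M[F]_2 :=
  match p with
  | 0 => 1%:M
  | p'.+1 => SA (a + p'%:R) b c *m Al a b c p'
  end.
Definition Dm (a b c : F) := SA a b (c+1) *m SG a b c.
Fixpoint Mix (a b c : F) (p : nat) : 'M[F]_2 :=
  match p with
  | 0 => 1%:M
  | p'.+1 => Dm (a + p'%:R) b (c + p'%:R) *m Mix a b c p'
  end.

Lemma MixS a b c p : Mix a b c p.+1 = Dm (a + p%:R) b (c + p%:R) *m Mix a b c p.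
Proof. by []. Qed.
Lemma QmS a b c p : Qm a b c p.+1 = Eh b (c + p.+1%:R) *m M2 (a + p.+1%:R) 0 0 1 *m Qm a b c p.
Proof. by []. Qed.
Lemma NmS a b c p : Nm a b c p.+1 = Nmat a b (c + p%:R) *m Nm a b c p.
Proof. by []. Qed.
Lemma mulmx2E (A B : 'M[F]_2) i j : (A *m B) i j = A i 0 * B 0 j + A i 1 * B 1 j.
Proof.
rewrite mxE !big_ord_recl big_ord0 addr0.
have -> : lift ord0 ord0 = 1 :> 'I_2 by apply: val_inj.
by have -> : ord0 = 0 :> 'I_2 by apply: val_inj.
Qed.
Lemma M2E00 a b c d : M2 a b c d 0 0 = a. Proof. by rewrite mxE. Qed.
Lemma M2E01 a b c d : M2 a b c d 0 1 = b. Proof. by rewrite mxE. Qed.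
Lemma M2E10 a b c d : M2 a b c d 1 0 = c. Proof. by rewrite mxE. Qed.
Lemma M2E11 a b c d : M2 a b c d 1 1 = d. Proof. by rewrite mxE. Qed.
Lemma M2_eta (A : 'M[F]_2) : A = M2 (A 0 0) (A 0 1) (A 1 0) (A 1 1).
Proof.
apply/matrixP => i j; rewrite !mxE.
case: i => [[|[|//]] Hi]; case: j => [[|[|//]] Hj] /=;
  by congr (A _ _); apply: val_inj.
Qed.
Lemma M2_mul a b c d e f g h :
  M2 a b c d *m M2 e f g h = M2 (a*e+b*g) (a*f+b*h) (c*e+d*g) (c*f+d*h).
Proof.
apply/matrixP => i j; rewrite mulmx2E !mxE.
by case: i => [[|[|//]] Hi]; case: j => [[|[|//]] Hj].
Qed.
Lemma M2_scale k a b c d : k *: M2 a b c d = M2 (k*a) (k*b) (k*c) (k*d).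
Proof.
apply/matrixP => i j; rewrite !mxE.
by case: i => [[|[|//]] Hi]; case: j => [[|[|//]] Hj].
Qed.
Lemma M2_1 : (1%:M : 'M[F]_2) = M2 1 0 0 1.
Proof.
rewrite [LHS]M2_eta !mxE !eqxx.
have -> : (0 == 1 :> 'I_2) = false by [].
have -> : (1 == 0 :> 'I_2) = false by [].
done.
Qed.
Lemma det2 (A : 'M[F]_2) : \det A = A 0 0 * A 1 1 - A 0 1 * A 1 0.
Proof.
rewrite (expand_det_row _ 0) !big_ord_recl big_ord0 addr0 /cofactor !det_mx11 !mxE.
have E1 : lift ord0 ord0 = 1 :> 'I_2 by apply: val_inj.
have E0 : ord0 = 0 :> 'I_2 by apply: val_inj.
have E2 : lift 0 (0 : 'I_1) = 1 :> 'I_2 by apply: val_inj.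
have E4 : lift (lift ord0 ord0) (0:'I_1) = 0 :> 'I_2 by apply: val_inj.
have E5 : lift ord0 (0:'I_1) = 1 :> 'I_2 by apply: val_inj.
by rewrite ?E4 ?E2 ?E5 ?E1 ?E0 add0n expr0 expr1 mul1r mulN1r mulrN.
Qed.
Lemma M2_eq a b c d a' b' c' d' : a = a' -> b = b' -> c = c' -> d = d' ->
  M2 a b c d = M2 a' b' c' d'.
Proof. by move=> -> -> -> ->. Qed.

Lemma neq0E (x y : F) : y != 0 -> x = y -> x != 0.
Proof. by move=> h ->. Qed.

Lemma pcS x n : pc x n.+1 = pc x n * (x + n%:R).
Proof. by rewrite /pc big_ord_recr. Qed.
Lemma pc0 x : pc x 0 = 1.
Proof. by rewrite /pc big_ord0. Qed.
Lemma pcSl x n : pc x n.+1 = x * pc (x + 1) n.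
Proof.
rewrite /pc big_ord_recl addr0; congr (_ * _); apply: eq_bigr => i _.
have -> : nat_of_ord (lift ord0 i) = i.+1 by [].
by rewrite -natr1; ring.
Qed.
Lemma pcD x m n : pc x (m + n) = pc x m * pc (x + m%:R) n.
Proof.
elim: n => [|n IH]; first by rewrite addn0 pc0 mulr1.
by rewrite addnS !pcS IH natrD addrA mulrA.
Qed.
Lemma pc_neq0 x n : (forall i : nat, x + i%:R != 0) -> pc x n != 0.
Proof. by move=> h; rewrite /pc; apply/prodf_neq0 => i _; apply: h. Qed.

Ltac nz1 := match goal with
 | |- is_true (?x != 0) => first [ assumption | exact: oner_neq0 |
     match goal with H : is_true (?y != 0) |- _ => apply: (neq0E H); ring end ]
 end.
Ltac nzs := repeat (apply/andP; split); try nz1.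

Lemma comm_gen a b c : z != 0 -> 1 - z != 0 -> c != 0 -> c + 1 != 0 -> a + 1 != 0 -> c - a != 0 ->
  c - (a + 1) != 0 -> c - b != 0 ->
  SA a b (c+1) *m SG a b c = SG (a+1) b c *m SA a b c.
Proof.
move=> hz hz1 h1 h2 h3 h4 h5 h6.
by rewrite /SA /SG !M2_mul; apply: M2_eq; field; nzs.
Qed.

Lemma AP_Al a b c p r : AP a b c p r = Al a b (c + r%:R) p *m AG a b c r.
Proof.
elim: p => [|p IH] /=; first by rewrite mul1mx.
by rewrite IH mulmxA.
Qed.

Lemma AG_add a b c s q : AG a b c (s + q) = AG a b (c + s%:R) q *m AG a b c s.
Proof.
elim: q => [|q IH]; first by rewrite addn0 mul1mx.
by rewrite addnS /= IH mulmxA natrD addrA.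
Qed.

Section Hyps.
Variables (a b g : F).
Hypotheses (hz : z != 0) (hz1 : 1 - z != 0) (hA : forall n : nat, a + n.+1%:R != 0)
  (hG : forall n : nat, g + n%:R != 0) (hGB : forall n : nat, g - b + n%:R != 0)
  (hGA : forall m : int, g - a + m%:~R != 0).

Lemma push n p : SG (a + p%:R) b (g + n%:R) *m Al a b (g + n%:R) p =
  Al a b (g + n%:R + 1) p *m SG a b (g + n%:R).
Proof.
elim: p => [|p IH] /=; first by rewrite addr0 mulmx1 mul1mx.
rewrite -mulmxA -IH !mulmxA; congr (_ *m _).
have -> : a + p.+1%:R = a + p%:R + 1 by rewrite -natr1 addrA.
symmetry; apply: comm_gen => //.
- have := hG n.+1; by rewrite -natr1 addrA.
- have := hA p; by rewrite -natr1 addrA.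
- apply: (neq0E (hGA (n%:Z - p%:Z))); rewrite intrB; ring.
- apply: (neq0E (hGA (n%:Z - p%:Z - 1))); rewrite !intrB; ring.
- have := hGB n; apply: contra_neq => h; rewrite -h; ring.
Qed.

Lemma Mix_Al s p : Mix a b (g + s%:R) p = Al a b (g + s%:R + p%:R) p *m AG a b (g + s%:R) p.
Proof.
elim: p => [|p IH] /=; first by rewrite mulmx1.
rewrite IH /Dm.
have E : g + s%:R + p%:R = g + (s + p)%:R by rewrite natrD addrA.
rewrite -!mulmxA; congr (_ *m _); first by rewrite -natr1 addrA.
rewrite !mulmxA; congr (_ *m _).
rewrite E push // -E.
by rewrite -natr1 addrA.
Qed.

Lemma AP_split s p : AP a b g p (s + p) = Mix a b (g + s%:R) p *m AG a b g s.
Proof.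
by rewrite AP_Al AG_add mulmxA Mix_Al natrD addrA.
Qed.

Lemma nGA n : g + n%:R - a != 0.
Proof. apply: (neq0E (hGA n%:Z)); ring. Qed.
Lemma nGB n : g + n%:R - b != 0.
Proof. apply: (neq0E (hGB n)); ring. Qed.
Lemma pcG n : pc g n != 0.
Proof. exact: pc_neq0. Qed.
Lemma pcGA n : pc (g - a) n != 0.
Proof. apply: pc_neq0 => i; apply: (neq0E (hGA i%:Z)); ring. Qed.
Lemma pcGB n : pc (g - b) n != 0.
Proof. exact: pc_neq0. Qed.
Lemma nG0 : g != 0.
Proof. by have := hG 0; rewrite addr0. Qed.

Lemma AG_rep s : AG a b g s = (pc g s / (pc (g - a) s * pc (g - b) s)) *:
   (M2 1 0 0 (g + s%:R) *m Nm a b g s *m M2 1 0 0 g^-1).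
Proof.
have h0 := nG0.
elim: s => [|s IH] /=.
  rewrite !pc0 M2_1 !M2_mul M2_scale; apply: M2_eq; field; nzs.
rewrite IH !pcS /SG /Nmat; set N := Nm a b g s; rewrite (M2_eta N).
have h1 := hG s; have h2 := nGA s; have h3 := nGB s; have h4 := pcG s;
have h5 := pcGA s; have h6 := pcGB s; have h7 := hGB s.
have h8 : g - a + s%:R != 0 by apply: (neq0E (hGA s)); ring.
rewrite !M2_mul !M2_scale ?M2_mul; apply: M2_eq; field; nzs.
Qed.

Lemma pcGs s n : pc (g + s%:R) n != 0.
Proof. apply: pc_neq0 => i; apply: (neq0E (hG (s + i))); rewrite natrD; ring. Qed.
Lemma pcA1 n : pc (a + 1) n != 0.
Proof. apply: pc_neq0 => i; apply: (neq0E (hA i)); rewrite -natr1; ring. Qed.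
Lemma pcGsB s n : pc (g + s%:R - b) n != 0.
Proof. apply: pc_neq0 => i; apply: (neq0E (hGB (s + i))); rewrite natrD; ring. Qed.

Lemma Mix_rep s p : Mix a b (g + s%:R) p.+1 =
  (pc (g + s%:R) p.+1 / (pc (a + 1) p.+1 * pc (g + s%:R - b) p.+1)) *:
  (M2 (a + p.+1%:R) 0 0 (g + s%:R + p.+1%:R) *m Qm a b (g + s%:R) p *m M2 1 0 0 (g + s%:R)^-1).
Proof.
elim: p => [|p IH].
  have hC := hG s; have hC1 := hG s.+1; have ha1 := hA 0; have hCa := nGA s;
  have hCb := nGB s.
  rewrite /= mulmx1 !pcS !pc0 /Dm /SA /SG /Eh !M2_mul !M2_scale ?M2_mul.
  apply: M2_eq; field; nzs.
rewrite MixS IH QmS.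
set Q := Qm a b (g + s%:R) p; rewrite (M2_eta Q).
have hC := hG s; have hC1 := hG (s + p.+2); have ha1 := hA p.+1; have hCa := nGA s;
have hCb := hGB (s + p.+1); have hC2 := hG (s + p.+1).
have p1 := pcGs s p.+1; have p2 := pcA1 p.+1; have p3 := pcGsB s p.+1.
rewrite !(pcS _ p.+1) /Dm /SA /SG /Eh !M2_mul !M2_scale ?M2_mul.
apply: M2_eq; field; nzs.
Qed.

Lemma AP_entries s p :
  let r := (s + p.+1)%N in
  let Phi := Qm a b (g + s%:R) p *m Nm a b g s in
  let D := pc (g - a) s * pc (g - b) r in
  [/\ AP a b g p.+1 r 0 0 = pc g r * Phi 0 0 / (pc (a + 1) p * D),
      AP a b g p.+1 r 0 1 = pc (g + 1) r.-1 * Phi 0 1 / (pc (a + 1) p * D),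
      AP a b g p.+1 r 1 0 = pc g r.+1 * Phi 1 0 / (pc (a + 1) p.+1 * D) &
      AP a b g p.+1 r 1 1 = pc (g + 1) r * Phi 1 1 / (pc (a + 1) p.+1 * D)].
Proof.
move=> r Phi D.
have hg := nG0.
have E1 : pc (g + 1) r.-1 = pc g s * pc (g + s%:R) p * (g + s%:R + p%:R) / g.
  apply: (mulfI hg); rewrite -pcSl /r addnS /= pcS pcD; field; nzs.
have E2 : pc (g + 1) r = pc g s * pc (g + s%:R) p * (g + s%:R + p%:R) * (g + r%:R) / g.
  apply: (mulfI hg); rewrite -pcSl pcS /r addnS pcS pcD; field; nzs.
have E3 : pc g r = pc g s * pc (g + s%:R) p * (g + s%:R + p%:R).
  by rewrite /r addnS pcS pcD natrD addrA.
have E4 : pc (g - b) r = pc (g - b) s * pc (g + s%:R - b) p * (g + s%:R - b + p%:R).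
  rewrite /r addnS pcS pcD.
  have -> : g - b + s%:R = g + s%:R - b by ring.
  by rewrite natrD; ring.
rewrite /Phi /D /r AP_split Mix_rep AG_rep.
rewrite -/r E1 E2 (pcS g r) E3 E4 !(pcS _ p).
set Q := Qm a b (g + s%:R) p; set N := Nm a b g s.
rewrite (M2_eta Q) (M2_eta N) !(M2_mul, M2_scale) !M2E00 !M2E01 !M2E10 !M2E11.
have hC := hG s; have hCr := hG r; have ha1 := hA p; have hCa := nGA s;
have hCb := hGB (s + p); have hC2 := hG (s + p).
have p1 := pcGs s p; have p2 := pcA1 p; have p3 := pcGsB s p.
have p4 := pcG s; have p5 := pcGA s; have p6 := pcGB s.
have hCp : g + s%:R + p.+1%:R != 0 by apply: (neq0E (hG (s + p.+1))); rewrite natrD; ring.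
rewrite /r; clear E1 E2 E3 E4.
split; field; nzs.
Qed.

Lemma detSA a' c : c != 0 -> a' + 1 != 0 ->
  \det (SA a' b c) = (a' + 1 - c) / ((a' + 1) * (1 - z)).
Proof. move=> h1 h2; rewrite det2 /SA !M2E00 !M2E01 !M2E10 !M2E11; field; nzs. Qed.

Lemma detSG c : c - a != 0 -> c - b != 0 ->
  \det (SG a b c) = c * (c + 1) * (z - 1) / (z * (c - a) * (c - b)).
Proof. move=> h1 h2; rewrite det2 /SG !M2E00 !M2E01 !M2E10 !M2E11; field; nzs. Qed.

Lemma pcG1 n : pc (g + 1) n != 0.
Proof. apply: pc_neq0 => i; apply: (neq0E (hG i.+1)); rewrite -natr1; ring. Qed.

Lemma detAG r : \det (AG a b g r) =
  (z ^+ r)^-1 * (z - 1) ^+ r * pc g r * pc (g + 1) r / (pc (g - a) r * pc (g - b) r).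
Proof.
elim: r => [|r IH].
  by rewrite /= det1 !expr0 !pc0; field; nzs.
rewrite /= det_mulmx IH detSG; last 2 first.
- exact: nGA.
- exact: nGB.
rewrite !pcS !exprS.
have h1 := pcG r; have h2 := pcG1 r; have h3 := pcGA r; have h4 := pcGB r.
have h5 : z ^+ r != 0 by rewrite expf_neq0.
have h6 := nGA r; have h7 := nGB r; have h8 := hGB r; have h9 := hG r.
have h10 : g - a + r%:R != 0 by apply: (neq0E h6); ring.
field; nzs.
Qed.

Lemma detAP k p : \det (AP a b g p (k + p)) =
  (z ^+ (k + p))^-1 * (z - 1) ^+ k * pc g (k + p) * pc (g + 1) (k + p) /
  (pc (a + 1) p * pc (g - a) k * pc (g - b) (k + p)).
Proof.
elim: p k => [|p IH] k.
  by rewrite /= addn0 detAG pc0 mul1r.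
rewrite /= det_mulmx -addSnnS IH detSA; last 2 first.
- exact: hG.
- by apply: (neq0E (hA p)); rewrite -natr1; ring.
rewrite !(pcS _ p) !(pcS _ k) !exprS.
have h1 := pcG (k.+1 + p); have h2 := pcG1 (k.+1 + p); have h3 := pcGA k;
have h4 := pcGB (k.+1 + p); have h5 : z ^+ (k.+1 + p) != 0 by rewrite expf_neq0.
have h6 := pcA1 p; have h7 := hA p.
have h8 : g - a + k%:R != 0 by apply: (neq0E (hGA k)); ring.
have h9 : 1 - z != 0 := hz1.
have h11 : z ^+ (k + p) != 0 by rewrite expf_neq0.
rewrite !natrD.
field; nzs.
Qed.
End Hyps.
End Gen.


Definition isP (k : nat) (x : K) := exists phi, deg_ag_le phi k /\ x = evalABG phi.

Lemma isP_mono k l x : (k <= l)%N -> isP k x -> isP l x.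
Proof. move=> kl [phi [h ->]]; exists phi; split=> // m /h; move=> H; exact: leq_trans H kl. Qed.

Lemma isP_add k x y : isP k x -> isP k y -> isP k (x + y).
Proof.
move=> [p [hp ->]] [q [hq ->]]; exists (p + q); split.
  by move=> m /msuppD_le; rewrite mem_cat => /orP [/hp|/hq].
by rewrite /evalABG !rmorphD.
Qed.

Lemma isP_opp k x : isP k x -> isP k (- x).
Proof.
move=> [p [hp ->]]; exists (- p); split.
  by move=> m; rewrite (perm_mem (msuppN p)) => /hp.
by rewrite /evalABG !rmorphN.
Qed.

Lemma isP_sub k x y : isP k x -> isP k y -> isP k (x - y).
Proof. by move=> hx hy; apply: isP_add => //; apply: isP_opp. Qed.

Lemma isP_mul k l x y : isP k x -> isP l y -> isP (k + l) (x * y).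
Proof.
move=> [p [hp ->]] [q [hq ->]]; exists (p * q); split.
  move=> m /msuppM_le /allpairsP [[m1 m2] /= [h1 h2 ->]].
  rewrite !mnmDE.
  have := hp _ h1; have := hq _ h2; lia.
by rewrite /evalABG !rmorphM.
Qed.

Lemma isP_C (c : Kz) : isP 0 (embK c).
Proof.
exists c%:MP; split.
  by move=> m; rewrite msuppC; case: (c == 0) => //; rewrite inE => /eqP ->; rewrite !mnm0E.
by rewrite /evalABG map_mpolyC mevalC.
Qed.

Lemma isP_X (i : 'I_3) : isP ((i == 0 :> nat) + (i == 2 :> nat))%N (abg i).
Proof.
exists 'X_i; split.
  move=> m; rewrite msuppX inE => /eqP ->; rewrite !mnm1E.
  by case: i => [[|[|[|]]]].
by rewrite /evalABG map_mpolyX mevalX (bigD1 i) //= big1 ?mulr1 ?mnm1E ?eqxx ?expr1 //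
   => j /negbTE; rewrite mnm1E eq_sym => ->; rewrite expr0.
Qed.

Lemma isP_a : isP 1 aK.
Proof. exact: (isP_X ord0). Qed.
Lemma isP_b : isP 0 bK.
Proof. exact: (isP_X (@Ordinal 3 1 isT)). Qed.
Lemma isP_g : isP 1 gK.
Proof. exact: (isP_X (@Ordinal 3 2 isT)). Qed.
Lemma isP_nat n : isP 0 n%:R.
Proof. by have := isP_C n%:R; rewrite rmorph_nat. Qed.
Lemma isP_z : isP 0 zK.
Proof. exact: isP_C. Qed.
Lemma isP_zV : isP 0 zK^-1.
Proof. by have := isP_C zz^-1; rewrite fmorphV. Qed.
Lemma isP_0 k : isP k 0.
Proof. by exists 0; split; [move=> m; rewrite msupp0 | rewrite /evalABG !rmorph0]. Qed.


Lemma KhG (n : nat) : gK + n%:R != 0.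
Proof. by have := nzG n%:R; rewrite !rmorphD !rmorph_nat. Qed.
Lemma KhGB (n : nat) : gK - bK + n%:R != 0.
Proof.
have h := nzGB (FracField.tofrac 'X + n%:R); rewrite !rmorphB !rmorphD !rmorph_nat in h.
change (is_true (gK + n%:R - bK != 0)) in h.
by apply: (neq0E h); rewrite addrAC.
Qed.
Lemma KhGA (m : int) : gK - aK + m%:~R != 0.
Proof.
have h := nzGA (embg (FracField.tofrac 'X) + m%:~R); rewrite rmorphD rmorph_int in h.
change (is_true (gK + m%:~R - aK != 0)) in h.
by apply: (neq0E h); rewrite addrAC.
Qed.
Lemma KhA (n : nat) : aK + n.+1%:R != 0.
Proof. have h := nzA n.+1%:R; rewrite rmorph_nat in h; exact: h. Qed.

Lemma isP_1 : isP 0 1.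
Proof. have h := isP_nat 1; exact: h. Qed.

Lemma isP_dot k a1 b1 a2 b2 x1 y1 x2 y2 : (a1 + b1 <= k)%N -> (a2 + b2 <= k)%N ->
  isP a1 x1 -> isP b1 y1 -> isP a2 x2 -> isP b2 y2 -> isP k (x1 * y1 + x2 * y2).
Proof.
move=> h1 h2 p1 q1 p2 q2; apply: isP_add.
  exact: (isP_mono h1 (isP_mul p1 q1)).
exact: (isP_mono h2 (isP_mul p2 q2)).
Qed.

Lemma isP_gn n : isP 1 (gK + n%:R).
Proof. exact: (isP_add isP_g (isP_mono (leq0n 1) (isP_nat n))). Qed.

Definition QK s p := Qm zK aK bK (gK + s%:R) p.
Definition NK s := Nm zK aK bK gK s.

Lemma Eh_deg n : let E := Eh zK bK (gK + n%:R) in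
  [/\ isP 0 (E 0 0), isP 0 (E 0 1), isP 0 (E 1 0) & isP 1 (E 1 1)].
Proof.
rewrite /Eh !M2E00 !M2E01 !M2E10 !M2E11; split.
- exact: isP_1.
- exact: (isP_mul (isP_opp (isP_sub isP_1 isP_z)) isP_b).
- exact: (isP_opp isP_zV).
- have := isP_mul (isP_sub (isP_gn n) (isP_mono (leq0n 1) (isP_mul isP_b isP_z))) isP_zV.
  by rewrite addn0.
Qed.

Lemma isP_an j : isP 1 (aK + j%:R).
Proof. exact: (isP_add isP_a (isP_mono (leq0n 1) (isP_nat j))). Qed.

Lemma QK_deg s p :
  [/\ isP p (QK s p 0 0), isP p (QK s p 0 1), isP p (QK s p 1 0) & isP p.+1 (QK s p 1 1)].
Proof.
elim: p => [|p [h00 h01 h10 h11]].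
  exact: (Eh_deg s).
rewrite /QK QmS -mulmxA -/(QK s p).
have E : gK + s%:R + p.+1%:R = gK + (s + p.+1)%:R by rewrite natrD addrA.
rewrite E; have [e00 e01 e10 e11] := Eh_deg (s + p.+1).
set V := M2 _ _ _ _ *m QK s p.
have hd := isP_an p.+1.
have v00 : isP p.+1 (V 0 0).
  rewrite /V mulmx2E M2E00 M2E01; apply: (isP_dot _ _ hd h00 (@isP_0 0) h10); lia.
have v01 : isP p.+1 (V 0 1).
  rewrite /V mulmx2E M2E00 M2E01; apply: (isP_dot _ _ hd h01 (@isP_0 0) h11); lia.
have v10 : isP p (V 1 0).
  rewrite /V mulmx2E M2E10 M2E11; apply: (isP_dot _ _ (@isP_0 0) h00 isP_1 h10); lia.
have v11 : isP p.+1 (V 1 1).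
  rewrite /V mulmx2E M2E10 M2E11; apply: (isP_dot _ _ (@isP_0 0) h01 isP_1 h11); lia.
split; rewrite mulmx2E.
- apply: (isP_dot _ _ e00 v00 e01 v10); lia.
- apply: (isP_dot _ _ e00 v01 e01 v11); lia.
- apply: (isP_dot _ _ e10 v00 e11 v10); lia.
- apply: (isP_dot _ _ e10 v01 e11 v11); lia.
Qed.

Lemma Nmat_deg n : let N := Nmat zK aK bK (gK + n%:R) in
  [/\ isP 1 (N 0 0), isP 1 (N 0 1), isP 0 (N 1 0) & isP 1 (N 1 1)].
Proof.
rewrite /Nmat !M2E00 !M2E01 !M2E10 !M2E11; split.
- exact: (isP_sub (isP_sub (isP_gn n) isP_a) (isP_mono (leq0n 1) isP_b)).
- exact: (isP_mul (isP_mul (isP_sub isP_1 isP_z) isP_a) isP_b).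
- exact: isP_zV.
- exact: (isP_mul (isP_mul (isP_opp (isP_sub isP_1 isP_z)) (isP_gn n)) isP_zV).
Qed.

Lemma NK_deg s :
  [/\ isP s.+1 (NK s.+1 0 0), isP s.+1 (NK s.+1 0 1), isP s (NK s.+1 1 0) & isP s.+1 (NK s.+1 1 1)].
Proof.
elim: s => [|s [h00 h01 h10 h11]].
  rewrite /NK NmS /= mulmx1; exact: (Nmat_deg 0).
rewrite /NK NmS -/(NK s.+1).
have [e00 e01 e10 e11] := Nmat_deg s.+1.
split; rewrite mulmx2E.
- apply: (isP_dot _ _ e00 h00 e01 h10); lia.
- apply: (isP_dot _ _ e00 h01 e01 h11); lia.
- apply: (isP_dot _ _ e10 h00 e11 h10); lia.
- apply: (isP_dot _ _ e10 h01 e11 h11); lia.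
Qed.

Lemma Phi_deg s p : let r := (s + p.+1)%N in let Phi := QK s p *m NK s in
  [/\ isP r.-1 (Phi 0 0), isP r.-1 (Phi 0 1), isP r.-1 (Phi 1 0) & isP r (Phi 1 1)].
Proof.
case: s => [|s] r Phi.
  have [q00 q01 q10 q11] := QK_deg 0 p.
  have N0 : NK 0 = 1%:M by [].
  rewrite /Phi N0 mulmx1 /r add0n; by split.
have [q00 q01 q10 q11] := QK_deg s.+1 p.
have [n00 n01 n10 n11] := NK_deg s.
rewrite /Phi /r; split; rewrite mulmx2E.
- apply: (isP_dot _ _ q00 n00 q01 n10); lia.
- apply: (isP_dot _ _ q00 n01 q01 n11); lia.
- apply: (isP_dot _ _ q10 n00 q11 n10); lia.
- apply: (isP_dot _ _ q10 n01 q11 n11); lia.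
Qed.

Unset Implicit Arguments.
Theorem lemma3p3 (p r : nat) (hp : (1 <= p)%N) (hpr : (p <= r)%N) :
  (exists phi11 phi12 phi21 phi22 : {mpoly Kz[3]},
     [/\ deg_ag_le phi11 r.-1, deg_ag_le phi12 r.-1,
         deg_ag_le phi21 r.-1, deg_ag_le phi22 r &
     let D := poch (gK - aK) (r - p) * poch (gK - bK) r in
     [/\ Amat p r 0 0 = poch gK r * evalABG phi11 / (poch (aK + 1) p.-1 * D),
         Amat p r 0 1 = poch (gK + 1) r.-1 * evalABG phi12 / (poch (aK + 1) p.-1 * D),
         Amat p r 1 0 = poch gK r.+1 * evalABG phi21 / (poch (aK + 1) p * D) &
         Amat p r 1 1 = poch (gK + 1) r * evalABG phi22 / (poch (aK + 1) p * D)]])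
  /\
  \det (Amat p r) =
    zK ^- r * (zK - 1) ^+ (r - p) * poch gK r * poch (gK + 1) r
    / (poch (aK + 1) p * poch (gK - aK) (r - p) * poch (gK - bK) r).
Proof.
have HK := AP_entries nzZ nz1Z KhA KhG KhGB KhGA.
have HD := detAP nzZ nz1Z KhA KhG KhGB KhGA.
split; last first.
  have [k ->] : exists k, r = (k + p)%N by exists (r - p)%N; rewrite subnK.
  rewrite addnK; exact: HD.
case: p hp hpr => [//|p] _ hpr.
have [s ->] : exists s, r = (s + p.+1)%N by exists (r - p.+1)%N; rewrite subnK.
have [E00 E01 E10 E11] := HK s p.
have [[phi11 [g11 e11]] [phi12 [g12 e12]] [phi21 [g21 e21]] [phi22 [g22 e22]]] := Phi_deg s p.
exists phi11, phi12, phi21, phi22; split => //.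
rewrite addnK -e11 -e12 -e21 -e22.
split.
- exact: E00.
- exact: E01.
- exact: E10.
- exact: E11.
Qed.
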